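(* Let $Y(0),Y(1)$ be integrable real potential outcomes and $X$ a random vector in $\mathbb{R}^{d_X}$ with support $\mathcal{X}=\mathcal{X}_0\cup\mathcal{X}_1$, $\mathcal{X}_0\cap\mathcal{X}_1=\emptyset$, with $D=1\{X\in\mathcal{X}_1\}$ and $Y=DY(1)+(1-D)Y(0)$. Write $X=(X^{(1)},X^{(2)})$ for a fixed split of the coordinates and correspondingly $x=(x^{(1)},x^{(2)})$. Suppose $x\mapsto E[Y(d)|X=x]$ is continuous on $\mathcal{X}$ for $d=0,1$, and conditional local comonotonicity holds: for every $x_1\in\mathcal{X}$ there is a neighborhood $N$ of $x_1$ such that for all $x_2\in N\cap\mathcal{X}$ with $x_2^{(2)}=x_1^{(2)}$, $$E[Y(1)|X=x_1]\geq E[Y(1)|X=x_2]\iff E[Y(0)|X=x_1]\geq E[Y(0)|X=x_2].$$ Let $\mathcal{F}=\mathrm{cl}(\mathrm{int}(\mathcal{X}_1))\cap\mathrm{cl}(\mathrm{int}(\mathcal{X}_0))$ and for $d\in\{0,1\}$ let $g_d$ be a function on $\mathcal{X}_d\cup\mathcal{F}$ with $g_d(x)=E[Y|X=x]$ for $x\in\mathcal{X}_d$ and continuous at each point of $\mathcal{F}$. Suppose that for some $d$ and some $x\in\mathcal{X}_d$ there is a continuous path $p:[0,1]\to\mathcal{X}_d\cup\mathcal{F}$ with $p(0)=x$, $p(1)=x^*\in\mathcal{F}$, $p(t)^{(2)}=x^{(2)}$ for all $t\in[0,1]$, and $E[Y|X=p(t)]=E[Y|X=x]$ for all $t\in(0,1)$.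 Then $E[Y(1)|X=x]=g_1(x^* )$ and $E[Y(0)|X=x]=g_0(x^* )$.
   Context: Conditional expectation functions are understood as the unique continuous versions; for $z\in\mathcal{X}$, $E[Y|X=z]$ equals $E[Y(d)|X=z]$ when $z\in\mathcal{X}_d$. *)

(* Defs.v *)
From HB Require Import structures.
From mathcomp Require Import all_boot all_order all_algebra.
From mathcomp Require Import all_classical all_reals all_analysis.
Set Implicit Arguments. Unset Strict Implicit. Unset Printing Implicit Defensive.
Import Order.TTheory GRing.Theory Num.Theory.
Import numFieldNormedType.Exports.
Local Open Scope classical_set_scope.
Local Open Scope ring_scope.

(* Covariate space R^(n1+n2), split as x = (x^(1), x^(2)) with
   x^(2) = rsubmx x (the last n2 coordinates). *)
Definition xsnd (R : realType) (n1 n2 : nat) (x : 'rV[R]_(n1 + n2)) : 'rV[R]_n2 :=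
  rsubmx x.

(* Observed CEF: E[Y|X=z] = E[Y(1)|X=z] on X_1, E[Y(0)|X=z] on X_0
   (m1, m0 are the continuous versions of x |-> E[Y(d)|X=x]). *)
Definition obsCEF (R : realType) (n : nat) (X1 : set 'rV[R]_n)
  (m0 m1 : 'rV[R]_n -> R) (z : 'rV[R]_n) : R :=
  if `[< X1 z >] then m1 z else m0 z.

Definition frontier_set (R : realType) (n : nat) (X0 X1 : set 'rV[R]_n)
  : set 'rV[R]_n :=
  closure (interior X1) `&` closure (interior X0).

(* Main.v *)
Require Import Defs.
From HB Require Import structures.
From mathcomp Require Import all_boot all_order all_algebra.
From mathcomp Require Import all_classical all_reals all_analysis.
From mathcomp Require Import lra.
Import Order.TTheory GRing.Theory Num.Theory.
Import numFieldNormedType.Exports.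
Local Open Scope classical_set_scope.
Local Open Scope ring_scope.
Set Implicit Arguments. Unset Strict Implicit. Unset Printing Implicit Defensive.
Lemma itv01_0 (R : realType) : `[(0:R), 1]%classic 0.
Proof. by rewrite /= in_itv /= lexx ler01. Qed.
Lemma itv01_1 (R : realType) : `[(0:R), 1]%classic 1.
Proof. by rewrite /= in_itv /= lexx ler01. Qed.

Lemma neq_near (R : realType) (g : R -> R) (A : set R) t c :
  g @ within A (nbhs t) --> g t -> g t != c ->
  \forall s \near t, A s -> g s != c.
Proof.
move=> /cvgrPdist_lt H gc.
have e0 : 0 < `|g t - c| by rewrite normr_gt0 subr_eq0.
move: (H _ e0); rewrite near_withinE; apply: filterS => s /= Hs As.
move: (Hs As); apply: contraTneq => ->; by rewrite ltxx.
Qed.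

Lemma locmax_const (R : realType) (g : R -> R) :
  (forall t, `[(0:R),1]%classic t -> g @ within `[(0:R),1]%classic (nbhs t) --> g t) ->
  (forall t, `[(0:R),1]%classic t -> \forall s \near t, `[(0:R),1]%classic s -> g s <= g t) ->
  forall t, `[(0:R),1]%classic t -> g t = g 0.
Proof.
move=> gc gm.
set A := `[(0:R),1]%classic.
have key : forall y t0, A t0 -> g t0 <= y -> forall t, A t -> g t <= y.
  move=> y t0 At0 gy.
  set B := A `&` [set t | g t <= y].
  have BA : B = A.
    apply: segment_connected.
    - by exists t0.
    - exists (interior (~` A `|` [set t | g t <= y])); first exact: open_interior.
      apply/seteqP; split => t.
      + move=> [At gt]; split => //.
        move: (gm t At); apply: filterS => s Hs.
        have [As|nAs] := pselect (A s); last by left.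
        by right; exact: le_trans (Hs As) gt.
      + move=> [At /nbhs_singleton [//|gt]]; by split.
    - exists (closure B); first exact: closed_closure.
      apply/seteqP; split => t.
      + move=> Bt; split; first by case: Bt.
        exact: subset_closure.
      + move=> [At cBt]; split => //=.
        rewrite leNgt; apply/negP => ygt.
        have e0 : 0 < g t - y by rewrite subr_gt0.
        move/cvgrPdist_lt: (gc t At) => /(_ _ e0).
        rewrite near_withinE.
        move=> H'; have [s [[As gsy] Hs]] := cBt _ H'.
        have := Hs As; rewrite ltr_norml => /andP[_]; move: gsy => /= gsy. by rewrite ltrD2l ltrN2 ltNge gsy.
  move=> t At; have : B t by rewrite BA.
  by case.
have A0 : A 0 by exact: itv01_0.
move=> t At; apply/eqP; rewrite eq_le; apply/andP; split.
- exact: key (g 0) 0 A0 (lexx _) t At.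
- exact: key (g t) t At (lexx _) 0 A0.
Qed.

Lemma path_const (R : realType) (f h : R -> R) (c : R) :
  (forall t, `[(0:R),1]%classic t -> f @ within `[(0:R),1]%classic (nbhs t) --> f t) ->
  (forall t, `[(0:R),1]%classic t -> h @ within `[(0:R),1]%classic (nbhs t) --> h t) ->
  (forall t, `[(0:R),1]%classic t -> \forall s \near t, `[(0:R),1]%classic s ->
      (f s <= f t <-> h s <= h t)) ->
  f 0 = c ->
  (forall t, 0 < t < 1 -> f t = c \/ h t = c) ->
  f 1 = c /\ h 1 = h 0.
Proof.
set A := `[(0:R),1]%classic.
move=> fc hc com f0 fh.
have A0 : A 0 by exact: itv01_0.
have A1 : A 1 by exact: itv01_1.
have fh' : forall t, A t -> f t = c \/ h t = c.
  move=> t At.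
  have [->|tn0] := eqVneq t 0; first by left.
  have [->|tn1] := eqVneq t 1; last first.
    apply: fh; move: At; rewrite /A /= in_itv /= => /andP[t0 t1].
    by rewrite !lt_neqAle t0 t1 andbT eq_sym tn0 tn1.
  case: (eqVneq (f 1) c) => [|fn]; first by left.
  case: (eqVneq (h 1) c) => [|hn]; first by right.
  exfalso.
  have HH : \forall s \near (1:R), (A s -> f s != c) /\ (A s -> h s != c).
    near=> s; split; near: s; [exact: neq_near (fc 1 A1) fn | exact: neq_near (hc 1 A1) hn].
  have [e /= e0 He] := (nbhs_ballP _ _).1 HH.
  set m := Num.min e 1.
  have m0 : 0 < m by rewrite lt_min e0 ltr01.
  have me : m <= e by rewrite ge_min lexx.
  have m1 : m <= 1 by rewrite ge_min lexx orbT.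
  have sb : ball (1:R) e (1 - m / 2).
    rewrite /ball /= opprB addrC subrK ger0_norm; last by rewrite divr_ge0 // ltW.
    lra.
  have s01 : 0 < 1 - m / 2 < 1 by apply/andP; split; lra.
  have As : A (1 - m / 2).
    by rewrite /A /= in_itv /=; apply/andP; split; lra.
  have [H1 H2] := He _ sb.
  case: (fh _ s01) => E.
  - by move: (H1 As); rewrite E eqxx.
  - by move: (H2 As); rewrite E eqxx.
have fmax : forall t, A t -> \forall s \near t, A s -> f s <= f t.
  move=> t At.
  case: (eqVneq (f t) c) => ftc.
  - case: (eqVneq (h t) c) => htc.
    + move: (com t At); apply: filterS => s /= Hs As.
      case: (fh' s As) => [->|hs]; first by rewrite ftc.
      by apply/(Hs As); rewrite hs htc.
    + move: (neq_near (hc t At) htc); apply: filterS => s /= Hs As.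
      case: (fh' s As) => [->|hs]; first by rewrite ftc.
      by move: (Hs As); rewrite hs eqxx.
  - have htc : h t = c.
      by case: (fh' t At) => // ftc'; move: ftc; rewrite ftc' eqxx.
    have HH : \forall s \near t, (A s -> (f s <= f t <-> h s <= h t)) /\ (A s -> f s != c).
      near=> s; split; near: s; [exact: com t At | exact: neq_near (fc t At) ftc].
    move: HH; apply: filterS => s /= [Hs Hn] As.
    case: (fh' s As) => [fs|hs]; first by move: (Hn As); rewrite fs eqxx.
    by apply/(Hs As); rewrite hs htc.
have fconst := locmax_const fc fmax.
have hmax : forall t, A t -> \forall s \near t, A s -> h s <= h t.
  move=> t At; move: (com t At); apply: filterS => s /= Hs As.
  by apply/(Hs As); rewrite (fconst s As) (fconst t At).
split; first by rewrite (fconst 1 A1) f0.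
exact: locmax_const hc hmax _ A1.
Unshelve. all: by end_near.
Qed.

Theorem theoremB3 (R : realType) (n1 n2 : nat)
  (X X0 X1 : set 'rV[R]_(n1 + n2))
  (m0 m1 g0 g1 : 'rV[R]_(n1 + n2) -> R)
  (d : bool) (x xs : 'rV[R]_(n1 + n2)) (p : R -> 'rV[R]_(n1 + n2)) :
  (* X is the support of the covariate vector: closed, X = X0 ∪ X1 disjoint *)
  closed X -> X = X0 `|` X1 -> X0 `&` X1 = set0 ->
  (* continuity of the CEFs x |-> E[Y(d)|X=x] on X *)
  {within X, continuous m0} -> {within X, continuous m1} ->
  (* conditional local comonotonicity *)
  (forall z1, X z1 -> exists2 N, nbhs z1 N &
     forall z2, N z2 -> X z2 -> xsnd z2 = xsnd z1 ->
       (m1 z2 <= m1 z1 <-> m0 z2 <= m0 z1)) ->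
  (* g_d = E[Y|X=.] on X_d and continuous (on X_d ∪ F) at each point of F *)
  (forall z, X0 z -> g0 z = obsCEF X1 m0 m1 z) ->
  (forall z, X1 z -> g1 z = obsCEF X1 m0 m1 z) ->
  (forall z, frontier_set X0 X1 z ->
     g0 @ within (X0 `|` frontier_set X0 X1) (nbhs z) --> g0 z) ->
  (forall z, frontier_set X0 X1 z ->
     g1 @ within (X1 `|` frontier_set X0 X1) (nbhs z) --> g1 z) ->
  (* the path *)
  (if d then X1 else X0) x ->
  {within `[0, 1], continuous p} ->
  (forall t, t \in `[0, 1] -> ((if d then X1 else X0) `|` frontier_set X0 X1) (p t)) ->
  p 0 = x -> p 1 = xs -> frontier_set X0 X1 xs ->
  (forall t, t \in `[0, 1] -> xsnd (p t) = xsnd x) ->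
  (forall t, t \in `]0, 1[ -> obsCEF X1 m0 m1 (p t) = obsCEF X1 m0 m1 x) ->
  m1 x = g1 xs /\ m0 x = g0 xs.
Proof.
move=> cX XU Xdisj m0c m1c como g0E g1E g0c g1c xd pc ppath p0 p1 Fxs pxsnd pobs.
set F := frontier_set X0 X1.
have X0X : X0 `<=` X by rewrite XU => z; left.
have X1X : X1 `<=` X by rewrite XU => z; right.
have nX01 : forall z, X0 z -> ~ X1 z.
  by move=> z a b; have : (X0 `&` X1) z by []; rewrite Xdisj.
have clX : forall Y, Y `<=` X -> closure (interior Y) `<=` X.
  move=> Y YX; rewrite (closure_id X).1 //; apply: closureS.
  by move=> z /interior_subset /YX.
have FX : F `<=` X by move=> z [] /(clX _ X1X).
have Fcl1 : forall z, F z -> closure X1 z.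
  by move=> z [] + _; apply: closureS => w /interior_subset.
have Fcl0 : forall z, F z -> closure X0 z.
  by move=> z [] _; apply: closureS => w /interior_subset.
have m0w := (subspace_continuousP _ _).1 m0c.
have m1w := (subspace_continuousP _ _).1 m1c.
have gF1 : forall z, F z -> g1 z = m1 z.
  move=> z Fz.
  have PF : ProperFilter (within X1 (nbhs z)) by apply: within_nbhs_proper; exact: Fcl1.
  have L1 : g1 @ within X1 (nbhs z) --> g1 z.
    move=> Q /(g1c z Fz); apply: within_subset => w; by left.
  have L2 : g1 @ within X1 (nbhs z) --> m1 z.
    move=> Q HQ; have := m1w z (FX z Fz); move=> /(_ Q HQ).
    rewrite !nbhs_simpl /within /=; apply: filterS => w /= H Xw.
    by rewrite g1E // /obsCEF (asboolT Xw); apply: H; exact: X1X.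
  exact: (cvg_unique (@Rhausdorff R) L1 L2).
have gF0 : forall z, F z -> g0 z = m0 z.
  move=> z Fz.
  have PF : ProperFilter (within X0 (nbhs z)) by apply: within_nbhs_proper; exact: Fcl0.
  have L1 : g0 @ within X0 (nbhs z) --> g0 z.
    move=> Q /(g0c z Fz); apply: within_subset => w; by left.
  have L2 : g0 @ within X0 (nbhs z) --> m0 z.
    move=> Q HQ; have := m0w z (FX z Fz); move=> /(_ Q HQ).
    rewrite !nbhs_simpl /within /=; apply: filterS => w /= H Xw.
    by rewrite g0E // /obsCEF (asboolF (nX01 _ Xw)); apply: H; exact: X0X.
  exact: (cvg_unique (@Rhausdorff R) L1 L2).
rewrite gF1 // gF0 //.
set A := `[(0:R),1]%classic.
have A0 : A 0 by exact: itv01_0.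
have A1 : A 1 by exact: itv01_1.
have XdX : (if d then X1 else X0) `<=` X by case: d {xd ppath}.
have pX : forall t, A t -> X (p t).
  by move=> t At; case: (ppath t At) => [/XdX|/FX].
have pc' := (subspace_continuousP _ _).1 pc.
have mp : forall m : 'rV[R]_(n1 + n2) -> R, {within X, continuous m} ->
    forall t, A t -> (m \o p) @ within A (nbhs t) --> m (p t).
  move=> m mc t At Q HQ.
  have := (subspace_continuousP _ _).1 mc (p t) (pX t At); move=> /(_ Q HQ).
  rewrite !nbhs_simpl /within /= => HW.
  have := pc' t At; move=> /(_ _ HW).
  rewrite !nbhs_simpl /within /=; apply: filterS => s /= H As.
  exact: H As (pX s As).
have com : forall t, A t -> \forall s \near t, A s ->
    (m1 (p s) <= m1 (p t) <-> m0 (p s) <= m0 (p t)).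
  move=> t At; have [N Nn HN] := como _ (pX t At).
  have := pc' t At; move=> /(_ _ Nn).
  rewrite !nbhs_simpl /within /=; apply: filterS => s /= H As.
  by apply: HN (H As) (pX s As) _; rewrite !pxsnd.
have obs' : forall t, 0 < t < 1 -> obsCEF X1 m0 m1 (p t) = obsCEF X1 m0 m1 x.
  by move=> t t01; apply: pobs; rewrite in_itv.
have At01 : forall t : R, 0 < t < 1 -> A t.
  move=> t /andP[t0 t1]; rewrite /A /= in_itv /=; apply/andP; split; exact: ltW.
case: d xd {ppath XdX} => xd.
- have ox : obsCEF X1 m0 m1 x = m1 x by rewrite /obsCEF (asboolT xd).
  have com' : forall t, A t -> \forall s \near t, A s ->
      ((m1 \o p) s <= (m1 \o p) t <-> (m0 \o p) s <= (m0 \o p) t).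
    by move=> t At; move: (com t At); apply: filterS => s /= H As; exact: H As.
  have fh : forall t, 0 < t < 1 -> (m1 \o p) t = m1 x \/ (m0 \o p) t = m1 x.
    move=> t t01; have := pX t (At01 t t01); rewrite XU => -[h|h].
    + by right; rewrite /= -ox -(obs' t t01) /obsCEF (asboolF (nX01 _ h)).
    + by left; rewrite /= -ox -(obs' t t01) /obsCEF (asboolT h).
  have f0 : (m1 \o p) 0 = m1 x by rewrite /= p0.
  have [] := path_const (mp _ m1c) (mp _ m0c) com' f0 fh.
  by rewrite /= p0 p1 => -> ->.
- have ox : obsCEF X1 m0 m1 x = m0 x by rewrite /obsCEF (asboolF (nX01 _ xd)).
  have com' : forall t, A t -> \forall s \near t, A s ->
      ((m0 \o p) s <= (m0 \o p) t <-> (m1 \o p) s <= (m1 \o p) t).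
    by move=> t At; move: (com t At); apply: filterS => s /= H As; exact: iff_sym (H As).
  have fh : forall t, 0 < t < 1 -> (m0 \o p) t = m0 x \/ (m1 \o p) t = m0 x.
    move=> t t01; have := pX t (At01 t t01); rewrite XU => -[h|h].
    + by left; rewrite /= -ox -(obs' t t01) /obsCEF (asboolF (nX01 _ h)).
    + by right; rewrite /= -ox -(obs' t t01) /obsCEF (asboolT h).
  have f0 : (m0 \o p) 0 = m0 x by rewrite /= p0.
  have [] := path_const (mp _ m0c) (mp _ m1c) com' f0 fh.
  by rewrite /= p0 p1 => -> ->.
Qed.
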